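(* Let $n\ge8$, and let $d_{\rm YHZ}$ and $d_{\rm QXY}$ be as defined in the context, under the assumption stated there. Then $d_{\rm YHZ}\ge d_{\rm QXY}$.
   Context: Let $a_0,\dots,a_n$ be indeterminates, $P=\sum_{i=0}^na_ix^i$, $\boldsymbol F=(P^{(0)},\dots,P^{(n)})$ with $P^{(k)}$ the $k$-th derivative. $\mathcal M(n)$ is the set of nonincreasing tuples $\boldsymbol\mu=(\mu_1,\dots,\mu_m)$ of positive integers with sum $n$; its conjugate is $\bar{\boldsymbol\mu}=(\bar\mu_1,\bar\mu_2,\dots)$, $\bar\mu_i=\#\{j:\mu_j\ge i\}$; tuples are compared lexicographically after padding with zeros. Subresultants: for $\boldsymbol F=(F_0,\dots,F_t)$, $d_i=\deg F_i$ (formal degree), and $\boldsymbol\delta\in\mathbb{Z}_{\ge0}^t$ with $|\boldsymbol\delta|=\sum\delta_i\le d_0$, put $\delta_0=\max_{\delta_i\neq0,\,i\ge1}(d_i+\delta_i)-d_0$ if this max is $\ge d_0$, else $\delta_0=1$; $\boldsymbol M_{\boldsymbol\delta}(\boldsymbol F)$ is the $(\delta_0+|\boldsymbol\delta|)\times(\delta_0+d_0)$ matrix with rows the coefficient vectors of $x^{\delta_0-1}F_0,\dots,F_0,x^{\delta_1-1}F_1,\dots,F_1,\dots,x^{\delta_t-1}F_t,\dots,F_t$ w.r.t. $x^{\delta_0+d_0-1},\dots,1$; $R_{\boldsymbol\delta}(\boldsymbol F)=\operatorname{dp}\boldsymbol M_{\boldsymbol\delta}(\boldsymbol F)$, where for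 a $p\times q$ matrix ($p\le q$) $\operatorname{dp}\boldsymbol M=\sum_{i=0}^{q-p}\det[\boldsymbol M_1,\dots,\boldsymbol M_{p-1},\boldsymbol M_{q-i}]x^i$; $\overline{R_{\boldsymbol\delta}(\boldsymbol F)}$ is the coefficient of $x^{d_0-|\boldsymbol\delta|}$. For $\boldsymbol\delta$ of length $t\le n$, $R_{\boldsymbol\delta}(\boldsymbol F)=R_{\boldsymbol\delta}(P^{(0)},\dots,P^{(t)})$. Discriminant sequence: for $G=\sum_{i=0}^s b_ix^i$ (formal degree $s$), the discrimination matrix is the $2s\times2s$ matrix whose rows $2k-1$, $2k$ ($k=1,\dots,s$) are the coefficient vectors of $x^{s-k}G$ and $x^{s-k}G'$ w.r.t. $x^{2s-1},\dots,1$; $D_j(G)$ is its leading principal $2j\times2j$ minor. $d_{\rm YHZ}$: for $\boldsymbol\mu\in\mathcal M(n)$ let $\tilde G_0=P$, $\tilde G_i=R_{\bar\mu_i}(\tilde G_{i-1},\tilde G_{i-1}')$ ($i\ge1$) of formal degree $s_i=\sum_{k=i+1}^{\mu_1}\bar\mu_k$; $\mathcal S_{\boldsymbol\mu}$ consists of $D_j(\tilde G_i)$ for $0\le i\le\mu_1-2$, $\bar\mu_{i+1}+1\le j\le s_i$; $D_{s_{\mu_1-1}}(\tilde G_{\mu_1-1})$; and $D_j(\tilde G_i)$ for $0\le i\le\mu_1-1$, $1\le j\le\bar\mu_{i+1}$. $d_{\rm YHZ}$ is the maximal total degree in $a_0,\dots,a_n$ over $\bigcup_{\boldsymbol\mu}\mathcal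 S_{\boldsymbol\mu}$. Assumption: for every $\boldsymbol\mu$ and $0\le i\le\mu_1-1$, the coefficient of $x^{s_i}$ in $\tilde G_i$ and $\overline{R_{s_i}(\tilde G_i,\tilde G_i')}$ are not identically zero. $d_{\rm QXY}$: for $\boldsymbol\mu\in\mathcal M(n)$ let $G_0=P$, $G_i=R_{(\bar\mu_1,\dots,\bar\mu_i)}(\boldsymbol F)$ of formal degree $n-(\bar\mu_1+\dots+\bar\mu_i)$; $\mathcal T_{\boldsymbol\mu}$ consists of the coefficients of $R_{\boldsymbol\gamma}(\boldsymbol F)$ for $\boldsymbol\gamma\in\mathcal M(n)$, $\boldsymbol\gamma\succeq\bar{\boldsymbol\mu}$, and $D_j(G_i)$ for $0\le i\le\mu_1-1$, $1\le j\le\bar\mu_{i+1}$. $d_{\rm QXY}$ is the maximal total degree in $a_0,\dots,a_n$ over $\bigcup_{\boldsymbol\mu}\mathcal T_{\boldsymbol\mu}$. *)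

(* Defs.v *)
From HB Require Import structures.
From mathcomp Require Import all_boot all_order all_algebra.
From mathcomp Require Import mpoly.
Set Implicit Arguments. Unset Strict Implicit. Unset Printing Implicit Defensive.
Import Order.TTheory GRing.Theory Num.Theory.
Local Open Scope ring_scope.

Section Defs.
Variable n : nat.

(* coefficient ring Z[a_0, ..., a_n]; a_i is the variable 'X_i *)
Definition A := {mpoly int[n.+1]}.

(* total degree in a_0,...,a_n (the zero polynomial gets degree 0) *)
Definition tdeg (q : A) : nat := (msize q).-1.

Definition Pgen : {poly A} := \sum_(i < n.+1) ('X_i : A) *: 'X^i.

(* A polynomial with a formal degree: (polynomial, formal degree). *)
Definition fpoly := ({poly A} * nat)%type.
Definition fp0 : fpoly := (0, 0%N).

Definition shcoef (e : nat) (f : {poly A}) (k : nat) : A :=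
  if (e <= k)%N then f`_(k - e) else 0.

Definition dp (p q : nat) (M : nat -> nat -> A) : {poly A} :=
  \sum_(i < (q - p).+1)
     (\det (\matrix_(r < p, c < p)
              M r (if (c < p.-1)%N then (c : nat) else (q - 1 - i)%N))) *: 'X^i.

(* delta_0 for F = (F_0,...,F_t), delta = (delta_1,...,delta_t) *)
Definition delta0 (F : seq fpoly) (delta : seq nat) : nat :=
  let d0 := (nth fp0 F 0).2 in
  let m := (\max_(i < size delta | nth 0%N delta i != 0%N)
              ((nth fp0 F i.+1).2 + nth 0%N delta i))%N in
  if has (fun x => x != 0%N) delta && (d0 <= m)%N then (m - d0)%N else 1%N.

(* rows of M_delta(F): (shift exponent, polynomial), in the order
   x^{delta_0-1}F_0,...,F_0, x^{delta_1-1}F_1,...,F_1, ... *)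
Definition subres_rows (F : seq fpoly) (delta : seq nat) : seq (nat * {poly A}) :=
  let dl0 := delta0 F delta in
  [seq ((dl0 - 1 - j)%N, (nth fp0 F 0).1) | j <- iota 0 dl0] ++
  flatten [seq [seq ((nth 0%N delta i - 1 - j)%N, (nth fp0 F i.+1).1)
               | j <- iota 0 (nth 0%N delta i)] | i <- iota 0 (size delta)].

Definition subres_ncols (F : seq fpoly) (delta : seq nat) : nat :=
  (delta0 F delta + (nth fp0 F 0).2)%N.

(* entries of M_delta(F), columns w.r.t. x^{q-1},...,1 *)
Definition subres_mx (F : seq fpoly) (delta : seq nat) (r c : nat) : A :=
  let q := subres_ncols F delta in
  let row := nth (0%N, (0 : {poly A})) (subres_rows F delta) r in
  shcoef row.1 row.2 (q - 1 - c)%N.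

Definition Rsub (F : seq fpoly) (delta : seq nat) : {poly A} :=
  dp (size (subres_rows F delta)) (subres_ncols F delta) (subres_mx F delta).

Definition Rbar (F : seq fpoly) (delta : seq nat) : A :=
  (Rsub F delta)`_((nth fp0 F 0).2 - sumn delta).

Definition Rsub2 (G : {poly A}) (s k : nat) : {poly A} :=
  Rsub [:: (G, s); (G^`(), s.-1)] [:: k].
Definition Rbar2 (G : {poly A}) (s k : nat) : A :=
  Rbar [:: (G, s); (G^`(), s.-1)] [:: k].

Definition discr_mx (G : {poly A}) (s : nat) (r c : nat) : A :=
  shcoef (s - (r./2).+1)%N (if odd r then G^`() else G) (2 * s - 1 - c)%N.
Definition Dj (G : {poly A}) (s j : nat) : A :=
  \det (\matrix_(r < (2 * j)%N, c < (2 * j)%N) discr_mx G s r c).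

Definition Fgen : seq fpoly := [seq (Pgen^`(i), (n - i)%N) | i <- iota 0 n.+1].

End Defs.

Definition partb (m : nat) (s : seq nat) : bool :=
  [&& sorted geq s, all (fun x => 0 < x)%N s & sumn s == m].

Definition ffun_to_seq (m : nat) (f : {ffun 'I_m -> 'I_m.+1}) : seq nat :=
  [seq (f i : nat) | i <- enum 'I_m & (0 < f i)%N].

(* M(m): all nonincreasing tuples of positive integers with sum m
   (each has length <= m and parts <= m, hence arises from some f). *)
Definition Mset (m : nat) : seq (seq nat) :=
  undup [seq ffun_to_seq f | f <- enum {ffun 'I_m -> 'I_m.+1} &
                             partb m (ffun_to_seq f)].

(* conjugate: bar mu_i = #{j : mu_j >= i}, i = 1, ..., mu_1 (1-indexed) *)
Definition conjp (mu : seq nat) (i : nat) : nat := count (fun x => i <= x)%N mu.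
Definition conjseq (mu : seq nat) : seq nat :=
  [seq conjp mu i | i <- iota 1 (head 0%N mu)].

Fixpoint lexle (a b : seq nat) : bool :=
  match a, b with
  | [::], _ => true
  | x :: a', [::] => (x == 0%N) && lexle a' [::]
  | x :: a', y :: b' => (x < y)%N || ((x == y) && lexle a' b')
  end.

Definition sYHZ (mu : seq nat) (i : nat) : nat :=
  (\sum_(i.+1 <= k < (head 0%N mu).+1) conjp mu k)%N.

Fixpoint GYHZ (n : nat) (mu : seq nat) (i : nat) : {poly A n} :=
  match i with
  | 0 => Pgen n
  | i'.+1 => Rsub2 (GYHZ n mu i') (sYHZ mu i') (conjp mu i)
  end.

Definition SYHZ (n : nat) (mu : seq nat) : seq (A n) :=
  let mu1 := head 0%N mu in
  flatten [seq [seq Dj (GYHZ n mu i) (sYHZ mu i) j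
               | j <- iota (conjp mu i.+1).+1 (sYHZ mu i - conjp mu i.+1)]
          | i <- iota 0 (mu1.-1)]
  ++ [:: Dj (GYHZ n mu mu1.-1) (sYHZ mu mu1.-1) (sYHZ mu mu1.-1)]
  ++ flatten [seq [seq Dj (GYHZ n mu i) (sYHZ mu i) j
                  | j <- iota 1 (conjp mu i.+1)]
             | i <- iota 0 mu1].

Definition dYHZ (n : nat) : nat :=
  (\max_(mu <- Mset n) \max_(q <- SYHZ n mu) tdeg q)%N.

Definition YHZ_assumption (n : nat) : Prop :=
  forall mu, mu \in Mset n -> forall i, (i < head 0%N mu)%N ->
    (GYHZ n mu i)`_(sYHZ mu i) != 0 /\
    Rbar2 (GYHZ n mu i) (sYHZ mu i) (sYHZ mu i) != 0.

Definition sQXY (n : nat) (mu : seq nat) (i : nat) : nat :=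
  (n - sumn (take i (conjseq mu)))%N.

Definition GQXY (n : nat) (mu : seq nat) (i : nat) : {poly A n} :=
  if i is 0 then Pgen n else Rsub (Fgen n) (take i (conjseq mu)).

Definition polycoefs (R : nzRingType) (p : {poly R}) : seq R :=
  [seq p`_k | k <- iota 0 (size p)].

Definition TQXY (n : nat) (mu : seq nat) : seq (A n) :=
  flatten [seq polycoefs (Rsub (Fgen n) gamma)
          | gamma <- Mset n & lexle (conjseq mu) gamma]
  ++ flatten [seq [seq Dj (GQXY n mu i) (sQXY n mu i) j
                  | j <- iota 1 (conjp mu i.+1)]
             | i <- iota 0 (head 0%N mu)].

Definition dQXY (n : nat) : nat :=
  (\max_(mu <- Mset n) \max_(q <- TQXY n mu) tdeg q)%N.

(* Main.v *)
Require Import Defs.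
From mathcomp Require Import all_boot all_order all_algebra.
From mathcomp Require Import mpoly zify.
Set Implicit Arguments. Unset Strict Implicit. Unset Printing Implicit Defensive.
Import Order.TTheory GRing.Theory Num.Theory.
Local Open Scope ring_scope.

Section Detf.
Variable R : idomainType.

Definition detf N (f : nat -> nat -> R) := \det (\matrix_(r < N, c < N) f r c).

Lemma detf_ext N f g : (forall r c, (r < N)%N -> (c < N)%N -> f r c = g r c) ->
  detf N f = detf N g.
Proof.
by move=> h; rewrite /detf; congr (\det _); apply/matrixP => i j; rewrite !mxE h.
Qed.

Lemma detf_expand N f : (forall r, (0 < r < N.+1)%N -> f r 0%N = 0) ->
  detf N.+1 f = f 0%N 0%N * detf N (fun r c => f r.+1 c.+1).
Proof.
move=> h; rewrite /detf (expand_det_col _ ord0) big_ord_recl big1 ?addr0.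
  rewrite mxE /cofactor /= expr0 mul1r; congr (_ * (\det _)).
  by apply/matrixP => i j; rewrite !mxE !lift0.
move=> i _; rewrite mxE lift0 h ?mul0r //=; exact: ltn_ord.
Qed.

Lemma detf_perm N f g (s : nat -> nat) :
  (forall r, (r < N)%N -> (s r < N)%N) ->
  {in [pred r | (r < N)%N] &, injective s} ->
  (forall r c, (r < N)%N -> (c < N)%N -> f r c = g (s r) c) ->
  detf N g != 0 -> detf N f != 0.
Proof.
move=> hs sinj hfg nz.
pose so (i : 'I_N) : 'I_N := Ordinal (hs _ (ltn_ord i)).
have so_inj : injective so.
  by move=> i j /(congr1 val) /= /sinj e; apply/val_inj; apply: e; rewrite inE.
pose p := perm.perm so_inj.
have -> : detf N f = \det (row_perm p (\matrix_(r < N, c < N) g r c)).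
  rewrite /detf; congr (\det _); apply/matrixP => i j.
  by rewrite !mxE perm.permE /= hfg.
by rewrite row_permE det_mulmx det_perm mulf_neq0 // signr_eq0.
Qed.

Lemma coef0_dpf p q (M : nat -> nat -> R) :
  (\sum_(i < (q - p).+1)
     (\det (\matrix_(r < p, c < p)
              M r (if (c < p.-1)%N then (c : nat) else (q - 1 - i)%N))) *: 'X^i)`_0
  = detf p (fun r c => M r (if (c < p.-1)%N then c else (q - 1)%N)).
Proof.
rewrite coef_sum big_ord_recl big1 ?addr0.
  by rewrite coefZ coefXn /= mulr1 subn0.
by move=> i _; rewrite coefZ coefXn /= mulr0.
Qed.

End Detf.

Section Homog.
Variable n : nat.
Local Notation A := (A n).

Lemma tdeg_homog_le d (q : A) : q \is d.-homog -> (tdeg q <= d)%N.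
Proof.
move=> /dhomogP h; rewrite /tdeg msizeE.
have : (\max_(m <- msupp q) (mdeg m).+1 <= d.+1)%N.
  by apply/bigmax_leqP_seq => m mq _; rewrite h.
by case: (\max_(m <- msupp q) (mdeg m).+1)%N.
Qed.

Lemma tdeg_homog_eq d (q : A) : q != 0 -> q \is d.-homog -> tdeg q = d.
Proof.
move=> nz hq; apply/eqP; rewrite eqn_leq tdeg_homog_le //=.
move/dhomogP: hq => h; rewrite /tdeg msizeE.
have mq := mlead_supp nz.
have := @leq_bigmax_seq _ (msupp q) xpredT (fun m => (mdeg m).+1) _ mq isT.
rewrite h //; case: (\max_(m <- msupp q) (mdeg m).+1)%N => //.
Qed.

Lemma prod_homog e p (F : 'I_p -> A) :
  (forall i, F i \is e.-homog) -> \prod_i F i \is (p * e).-homog.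
Proof.
elim: p F => [|p IH] F hF; first by rewrite big_ord0 dhomog1.
rewrite big_ord_recr /= mulSnr; apply: dhomogM; last exact: hF.
exact: IH.
Qed.

Lemma det_homog e p (M : 'M[A]_p) :
  (forall i j, M i j \is e.-homog) -> \det M \is (p * e).-homog.
Proof.
move=> hM; rewrite /determinant; apply: rpred_sum => s _.
have hp := prod_homog (fun i => hM i (perm.fun_of_perm s i)).
by case: (perm.odd_perm s); rewrite ?expr1 ?expr0 ?mulN1r ?mul1r ?rpredN.
Qed.
End Homog.

Section Hp.
Variable n : nat.
Local Notation A := (A n).

Definition Hp e (p : {poly A}) := forall k, p`_k \is e.-homog.

Lemma Hp0 e : Hp e 0.
Proof. by move=> k; rewrite coef0 rpred0. Qed.

Lemma Hp_deriv e p : Hp e p -> Hp e p^`().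
Proof. by move=> h k; rewrite coef_deriv; apply: rpredMn; apply: h. Qed.

Lemma Hp_derivn e p i : Hp e p -> Hp e p^`(i).
Proof. by move=> h; elim: i => [|i IH]; rewrite ?derivn0 // derivnS; apply: Hp_deriv. Qed.

Lemma shcoef_homog e s p k : Hp e p -> shcoef s p k \is e.-homog.
Proof. by move=> h; rewrite /shcoef; case: ifP => _; rewrite ?rpred0. Qed.

Lemma Hp_sumX e N (c : 'I_N -> A) :
  (forall i, c i \is e.-homog) -> Hp e (\sum_(i < N) c i *: 'X^i).
Proof.
move=> h k; rewrite coef_sum; apply: rpred_sum => i _.
by rewrite coefZ coefXn mulr_natr; apply: rpredMn; apply: h.
Qed.

Lemma Hp_dp e p q (M : nat -> nat -> A) :
  (forall r c, M r c \is e.-homog) -> Hp (p * e) (dp p q M).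
Proof.
move=> h; rewrite /dp; apply: Hp_sumX => i.
by apply: (@det_homog n e p) => r c; rewrite mxE.
Qed.

Lemma subres_rows_mem (F : seq (fpoly n)) delta x :
  x \in subres_rows F delta -> exists i, x.2 = (nth (fp0 n) F i).1.
Proof.
rewrite /subres_rows mem_cat => /orP [/mapP [j _ ->]|/flattenP [s /mapP [i _ ->] /mapP [j _ ->]]].
  by exists 0%N.
by exists i.+1.
Qed.

Lemma Hp_Rsub e (F : seq (fpoly n)) delta :
  (forall i, Hp e (nth (fp0 n) F i).1) ->
  Hp (size (subres_rows F delta) * e) (Rsub F delta).
Proof.
move=> hF; rewrite /Rsub; apply: Hp_dp => r c; rewrite /subres_mx.
case: (ltnP r (size (subres_rows F delta))) => hr.
  have [i ->] := subres_rows_mem (mem_nth (0%N, 0) hr).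
  exact: shcoef_homog.
by rewrite nth_default //; apply: shcoef_homog; apply: Hp0.
Qed.

Lemma Hp_Pgen : Hp 1 (Pgen n).
Proof.
rewrite /Pgen => k; rewrite coef_sum; apply: rpred_sum => i _.
rewrite coefZ coefXn mulr_natr; apply: rpredMn; by rewrite dhomogX; apply/eqP; apply: mdeg1.
Qed.

Lemma Hp_Fgen i : Hp 1 (nth (fp0 n) (Fgen n) i).1.
Proof.
rewrite /Fgen; case: (ltnP i (size (iota 0 n.+1))) => hi.
  by rewrite (nth_map 0%N) //=; apply: Hp_derivn; apply: Hp_Pgen.
by rewrite nth_default ?size_map //; apply: Hp0.
Qed.

Lemma size_subres_rows (F : seq (fpoly n)) delta :
  size (subres_rows F delta) = (delta0 F delta + sumn delta)%N.
Proof.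
rewrite /subres_rows size_cat size_map size_iota size_flatten; congr addn.
rewrite /shape -map_comp.
have -> : sumn delta = sumn [seq nth 0%N delta i | i <- iota 0 (size delta)].
  by rewrite -{1}(mkseq_nth 0%N delta).
by congr sumn; apply: eq_map => i /=; rewrite size_map size_iota.
Qed.

Lemma Dj_homog e G s j : Hp e G -> Dj G s j \is (2 * j * e).-homog.
Proof.
move=> h; apply: (@det_homog n e) => r c; rewrite mxE /discr_mx.
by apply: shcoef_homog; case: ifP => _ //; apply: Hp_deriv.
Qed.

End Hp.
Local Close Scope ring_scope.
Lemma sumn_mapD (T : Type) (f g : T -> nat) s :
  sumn [seq f i + g i | i <- s] = sumn (map f s) + sumn (map g s).
Proof. by elim: s => //= x s ->; lia. Qed.

Lemma sum_iota_le x a m :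
  sumn [seq nat_of_bool (i <= x) | i <- iota a m] <= x.+1 - a.
Proof.
elim: m a => [|m IH] a //=; have := IH a.+1.
by case: (leqP a x) => h /=; lia.
Qed.

Lemma sumn_conj_le a m s : 0 < a ->
  sumn [seq count (fun x => i <= x) s | i <- iota a m] <= sumn s.
Proof.
move=> ha; elim: s => [|y s IH] /=.
  by elim: (iota a m).
rewrite sumn_mapD; have := sum_iota_le y a m; lia.
Qed.

Lemma sumn_take_le k s : sumn (take k s) <= sumn s.
Proof. by rewrite -{2}(cat_take_drop k s) sumn_cat leq_addr. Qed.

Lemma size_le_sumn s : all (fun x => 0 < x) s -> size s <= sumn s.
Proof. by elim: s => //= x s IH /andP [h /IH]; lia. Qed.

Lemma Mset_part m mu : mu \in Mset m -> partb m mu.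
Proof.
rewrite /Mset mem_undup => /mapP [f]; rewrite mem_filter => /andP [hp _] ->.
exact: hp.
Qed.

Lemma conjp_le_size mu i : conjp mu i <= size mu.
Proof. exact: count_size. Qed.

Lemma conjp_anti mu i j : i <= j -> conjp mu j <= conjp mu i.
Proof. by move=> hij; apply: sub_count => x /= h; apply: leq_trans h. Qed.

Lemma sumn_conjseq mu : sumn (conjseq mu) <= sumn mu.
Proof. exact: sumn_conj_le. Qed.

Lemma conjseq_nth mu i : i < head 0 mu -> nth 0 (conjseq mu) i = conjp mu i.+1.
Proof. by move=> h; rewrite /conjseq (nth_map 0) ?size_iota // nth_iota // add1n. Qed.

Lemma size_conjseq mu : size (conjseq mu) = head 0 mu.
Proof. by rewrite size_map size_iota. Qed.

Lemma conjseq_le mu x : x \in conjseq mu -> x <= conjp mu 1.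
Proof.
move=> /mapP [l]; rewrite mem_iota => /andP [h _] ->; exact: conjp_anti.
Qed.
Lemma delta0_le n (F : seq (fpoly n)) delta B :
  (forall i, i < size delta -> (nth (fp0 n) F i.+1).2 + nth 0 delta i <= B) ->
  delta0 F delta <= maxn 1 (B - (nth (fp0 n) F 0).2).
Proof.
move=> h; rewrite /delta0 /=.
set m := (\max_(i < size delta | _) _)%N.
have hm : m <= B by apply/bigmax_leqP => i _; apply: h.
case: ifP => _; lia.
Qed.

Lemma Fgen_deg n m : (nth (fp0 n) (Fgen n) m).2 <= n - m.
Proof.
rewrite /Fgen; case: (ltnP m n.+1) => hi.
  by rewrite (nth_map 0%N) ?size_iota // nth_iota.
by rewrite nth_default ?size_map ?size_iota.
Qed.

Lemma Fgen_deg0 n : (nth (fp0 n) (Fgen n) 0).2 = n.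
Proof. by rewrite /= subn0. Qed.

Lemma mem_le_sumn x s : x \in s -> x <= sumn s.
Proof. by elim: s => //= y s IH; rewrite inE => /orP [/eqP ->|/IH]; lia. Qed.

Lemma dQXY_le n : 2 <= n -> dQXY n <= n * n.
Proof.
move=> hn; apply/bigmax_leqP_seq => mu hmu _; apply/bigmax_leqP_seq => q hq _.
have /and3P [_ hpos /eqP hsum] := Mset_part hmu.
move: hq; rewrite /TQXY mem_cat => /orP [].
  move=> /flattenP [s /mapP [gamma hg ->] /mapP [k _ ->]].
  move: hg; rewrite mem_filter => /andP [_ hg].
  have /and3P [_ gpos /eqP gsum] := Mset_part hg.
  have hh := @Hp_Rsub n 1 (Fgen n) gamma (@Hp_Fgen n) k.
  apply: leq_trans (tdeg_homog_le hh) _.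
  rewrite size_subres_rows muln1 gsum.
  have : delta0 (Fgen n) gamma <= maxn 1 (2 * n - (nth (fp0 n) (Fgen n) 0).2).
    apply: delta0_le => i hi.
    have h1 := Fgen_deg n i.+1.
    have h2 : nth 0 gamma i <= n by rewrite -gsum; apply: mem_le_sumn; apply: mem_nth.
    lia.
  rewrite Fgen_deg0; nia.
move=> /flattenP [s /mapP [i hi ->] /mapP [j hj ->]].
rewrite mem_iota in hi; rewrite mem_iota in hj.
have hc1n : conjp mu 1 <= n.
  by rewrite -hsum; apply: leq_trans (conjp_le_size _ _) (size_le_sumn hpos).
case: i hi hj => [|i] hi hj.
  have hh := Dj_homog (sQXY n mu 0) j (@Hp_Pgen n).
  apply: leq_trans (tdeg_homog_le hh) _.
  have := conjp_anti mu (isT : 1 <= 1). nia.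
rewrite /GQXY.
have hh := Dj_homog (sQXY n mu i.+1) j (@Hp_Rsub n 1 (Fgen n) (take i.+1 (conjseq mu)) (@Hp_Fgen n)).
apply: leq_trans (tdeg_homog_le hh) _.
rewrite size_subres_rows muln1.
have hc1 : 1 <= conjp mu 1.
  by move: hi; rewrite /conjp; case: (mu) => [|x m] //= hx; lia.
set c1 := conjp mu 1; set S := sumn (take i.+1 (conjseq mu)); set c := conjp mu i.+2.
have hcc1 : c <= c1 by apply: conjp_anti.
have hS : c1 <= S.
  rewrite /S /conjseq; case: (head 0 mu) hi => [|h] hi //=; lia.
have hcS : c + S <= n.
  have : sumn (take i.+2 (conjseq mu)) <= n.
    by rewrite -hsum; apply: leq_trans (sumn_take_le _ _) (sumn_conjseq _).
  rewrite (take_nth 0) ?size_conjseq // -cats1 sumn_cat conjseq_nth //=; lia.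
have hd : delta0 (Fgen n) (take i.+1 (conjseq mu)) <= maxn 1 ((n - 1 + c1) - (nth (fp0 n) (Fgen n) 0).2).
  apply: delta0_le => l hl.
  have h1 := Fgen_deg n l.+1.
  have h2 : nth 0 (take i.+1 (conjseq mu)) l <= c1.
    by apply: conjseq_le; apply: mem_take (mem_nth 0 hl).
  lia.
rewrite Fgen_deg0 in hd.
nia.
Qed.

Local Open Scope ring_scope.

Lemma delta0_2 n (G : {poly A n}) s c : (0 < s)%N -> (0 < c)%N ->
  delta0 [:: (G, s); (G^`(), s.-1)] [:: c] = c.-1.
Proof.
move=> hs hc; rewrite /delta0 /=. rewrite big_mkcond big_ord1 /=.
have -> : (c != 0%N) = true by lia.
case: ifP => h; lia.
Qed.

Lemma rows2 n (G : {poly A n}) s c : (0 < s)%N -> (0 < c)%N ->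
  subres_rows [:: (G, s); (G^`(), s.-1)] [:: c] =
  [seq ((c.-1 - 1 - j)%N, G) | j <- iota 0 c.-1] ++
  [seq ((c - 1 - j)%N, G^`()) | j <- iota 0 c].
Proof. by move=> hs hc; rewrite /subres_rows delta0_2 //= cats0. Qed.

Lemma Dj_nz n (G : {poly A n}) s : (0 < s)%N -> (size G <= s.+1)%N ->
  G`_s != 0 -> Rbar2 G s s != 0 -> Dj G s s != 0.
Proof.
move=> hs hG h1 h2.
set F := [:: (G, s); (G^`(), s.-1)].
have hR : detf (s.-1 + s) (subres_mx F [:: s]) != 0.
  move: h2; rewrite /Rbar2 /Rbar /Rsub /dp /=. rewrite addn0 subnn coef0_dpf.
  rewrite /subres_ncols size_subres_rows /= delta0_2 // addn0.
  rewrite (@detf_ext _ _ _ (subres_mx F [:: s])) // => r c _ hc.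
  by have -> : (if (c < (s.-1 + s).-1)%N then c else (s.-1 + s - 1)%N) = c by case: ifP; lia.
rewrite /Dj; change (detf (2 * s) (discr_mx G s) != 0).
have -> : (2 * s = (s.-1 + s).+1)%N by lia.
rewrite detf_expand.
  apply: mulf_neq0.
    have -> : discr_mx G s 0 0 = G`_s.
      by rewrite /discr_mx /shcoef /= ifT; [congr nth; lia | lia].
    exact: h1.
  apply: (@detf_perm _ _ _ (subres_mx F [:: s]) (fun r => if odd r then r./2 else (s.-1 + r./2)%N)) _ _ _ hR.
  - by move=> r hr; case: ifP => _; lia.
  - by move=> x y; rewrite !inE; case: ifP => hx; case: ifP => hy; lia.
  - move=> r c hr hc.
    rewrite /subres_mx /subres_ncols delta0_2 // rows2 // nth_cat size_map size_iota /=.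
    rewrite /discr_mx /=; case: (boolP (odd r)) => ho /=.
      rewrite ifT; last by lia.
      rewrite (nth_map 0%N) ?size_iota; last by lia.
      rewrite nth_iota; last by lia.
      by congr shcoef => /=; lia.
    rewrite ifF; last by lia.
    rewrite (nth_map 0%N) ?size_iota; last by lia.
    rewrite nth_iota; last by lia.
    by congr shcoef => /=; lia.
move=> r /andP [h0 hr]; rewrite /discr_mx /shcoef; case: ifP => // he.
case: (boolP (odd r)) => ho /=.
  rewrite coef_deriv nth_default ?mul0rn //.
  by apply: leq_trans hG _; lia.
rewrite nth_default //.
by apply: leq_trans hG _; lia.
Qed.

Lemma Hp_Rsub2 n e (G : {poly A n}) s c : (0 < s)%N -> (0 < c)%N ->
  Hp e G -> Hp ((c.-1 + c) * e) (Rsub2 G s c).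
Proof.
move=> hs hc hG; rewrite /Rsub2.
have := @Hp_Rsub n e [:: (G, s); (G^`(), s.-1)] [:: c].
rewrite size_subres_rows delta0_2 //= addn0; apply.
case=> [|[|i]] //=; first exact: Hp_deriv.
by rewrite nth_nil; apply: Hp0.
Qed.

Lemma size_sumX n N (c : 'I_N -> A n) : (size (\sum_(i < N) c i *: 'X^i)%R <= N)%N.
Proof.
elim: N c => [|N IH] c; first by rewrite big_ord0 size_poly0.
rewrite big_ord_recr /=; apply: leq_trans (size_polyD _ _) _.
rewrite geq_max; apply/andP; split; first by apply: leq_trans (IH _) _.
by apply: leq_trans (size_scale_leq _ _) _; rewrite size_polyXn.
Qed.

Lemma size_Rsub2 n (G : {poly A n}) s c : (0 < s)%N -> (0 < c)%N ->
  (size (Rsub2 G s c) <= (s - c).+1)%N.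
Proof.
move=> hs hc; rewrite /Rsub2 /Rsub /dp; apply: leq_trans (size_sumX _) _.
by rewrite /subres_ncols size_subres_rows delta0_2 //= addn0; lia.
Qed.

Lemma partb_Mset m mu : partb m mu -> mu \in Mset m.
Proof.
move=> hp; have /and3P [_ hpos /eqP hsum] := hp.
have hsz : (size mu <= m)%N by rewrite -hsum; apply: size_le_sumn.
have hle : forall j, (nth 0%N mu j <= m)%N.
  move=> j; case: (ltnP j (size mu)) => hj; last by rewrite nth_default.
  by rewrite -hsum; apply: mem_le_sumn; apply: mem_nth.
pose f := [ffun i : 'I_m => (inord (nth 0%N mu i) : 'I_m.+1)].
have e : mu = ffun_to_seq f.
  rewrite /ffun_to_seq -filter_map.
  have -> : [seq (f i : nat) | i <- enum 'I_m] = map (nth 0%N mu) (iota 0 m).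
    rewrite -val_enum_ord -map_comp; apply: eq_map => i /=.
    by rewrite ffunE inordK // ltnS.
  rewrite -(subnKC hsz) iotaD map_cat filter_cat add0n.
  have -> : map (nth 0%N mu) (iota (size mu) (m - size mu)) =
            map (fun=> 0%N) (iota (size mu) (m - size mu)).
    by apply/eq_in_map => j; rewrite mem_iota => /andP [hj _]; rewrite nth_default.
  have -> : [seq x <- map (fun=> 0%N) (iota (size mu) (m - size mu)) | (0 < x)%N] = [::].
    by elim: (iota _ _).
  rewrite cats0.
  by rewrite -/(mkseq _ _) mkseq_nth; apply/esym/all_filterP.
rewrite /Mset mem_undup e; apply: map_f.
by rewrite mem_filter mem_enum andbT -e.
Qed.

Local Close Scope ring_scope.

Lemma sorted_mu a b : sorted geq (nseq a 3 ++ nseq b 1).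
Proof.
have tr : transitive geq by move=> x y z /= h1 h2; apply: leq_trans h2 h1.
elim: a => [|a IH] /=.
  elim: b => [|b IHb] //=; rewrite (path_sortedE tr) IHb andbT all_nseq; lia.
rewrite (path_sortedE tr) IH andbT all_cat !all_nseq; lia.
Qed.

Lemma arith_key k r : 2 <= k -> r < 4 ->
  (4 * k + r) * (4 * k + r) <=
  2 * k * ((k.-1 + k) * (((k + r + k).-1 + (k + r + k)) * 1)).
Proof.
move=> hk hr.
have : r = 0 \/ r = 1 \/ r = 2 \/ r = 3 by lia.
case=> [->|[->|[->|->]]]; nia.
Qed.

Theorem mainTheorem8 (n : nat) :
  (8 <= n)%N -> YHZ_assumption n -> (dQXY n <= dYHZ n)%N.
Proof.
move=> hn hass.
apply: leq_trans (dQXY_le (_ : 2 <= n)) _; first lia.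
set k := n %/ 4.
have hk : 2 <= k by rewrite /k; lia.
have hr : n = 4 * k + n %% 4 /\ n %% 4 < 4 by rewrite /k; lia.
set t := n - 3 * k.
set mu := nseq k 3 ++ nseq t 1.
have hcount : forall l, conjp mu l = (l <= 3) * k + (l <= 1) * t.
  by move=> l; rewrite /conjp count_cat !count_nseq.
have hhead : head 0 mu = 3 by rewrite /mu; case: (k) hk.
have hpart : partb n mu.
  apply/and3P; split; first exact: sorted_mu.
    by rewrite all_cat !all_nseq; lia.
  by rewrite sumn_cat !sumn_nseq; apply/eqP; rewrite /t; lia.
have hmu : mu \in Mset n := partb_Mset hpart.
have s0 : sYHZ mu 0 = n.
  by rewrite /sYHZ hhead big_ltn // big_ltn // big_ltn // big_geq // !hcount /=; rewrite /t; lia.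
have s1 : sYHZ mu 1 = 2 * k.
  by rewrite /sYHZ hhead big_ltn // big_ltn // big_geq // !hcount /=; lia.
have s2 : sYHZ mu 2 = k.
  by rewrite /sYHZ hhead big_ltn // big_geq // !hcount /=; lia.
have c1 : conjp mu 1 = n - 2 * k by rewrite hcount /= /t; lia.
have c2 : conjp mu 2 = k by rewrite hcount /=; lia.
have hG1 : Hp (((conjp mu 1).-1 + conjp mu 1) * 1) (GYHZ n mu 1).
  by apply: Hp_Rsub2; [rewrite s0; lia | rewrite c1; lia | exact: Hp_Pgen].
have hG2 : Hp (((conjp mu 2).-1 + conjp mu 2) * (((conjp mu 1).-1 + conjp mu 1) * 1))
              (GYHZ n mu 2).
  by apply: Hp_Rsub2; [rewrite s1; lia | rewrite c2; lia | exact: hG1].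
have hsz : size (GYHZ n mu 2) <= (sYHZ mu 2).+1.
  rewrite s2; apply: leq_trans (size_Rsub2 _ _ _) _; rewrite ?s1 ?c2; lia.
have h2 : 2 < head 0 mu by rewrite hhead.
have [a1 a2] := hass mu hmu 2 h2.
have hs2 : 0 < sYHZ mu 2 by rewrite s2; lia.
have Dnz := Dj_nz hs2 hsz a1 a2.
have hom := Dj_homog (sYHZ mu 2) (sYHZ mu 2) hG2.
have hdeg := tdeg_homog_eq Dnz hom.
have Dmem : Dj (GYHZ n mu 2) (sYHZ mu 2) (sYHZ mu 2) \in SYHZ n mu.
  by rewrite /SYHZ hhead mem_cat; apply/orP; right; rewrite mem_cat inE eqxx.
rewrite /dYHZ; apply: (bigmaxn_sup_seq _ hmu) => //.
apply: (bigmaxn_sup_seq _ Dmem) => //.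
rewrite hdeg.
rewrite s2 c1 c2.
case: hr => e hr4.
have hnk : n - 2 * k = k + n %% 4 + k by lia.
move: (arith_key hk hr4); rewrite -hnk -e; exact.
Qed.
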